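(* The ai-semiring $\mathcal{B}_2^1$ divides the direct square $\mathcal{A}_2^1\times\mathcal{A}_2^1$, i.e., $\mathcal{B}_2^1$ is a homomorphic image of a subsemiring of $\mathcal{A}_2^1\times\mathcal{A}_2^1$.
   Context: An ai-semiring is a structure $(R,+,\cdot)$ with $(R,+)$ a semilattice, $(R,\cdot)$ a semigroup, and multiplication distributing over addition on both sides; in a semilattice, $s\le t$ iff $s+t=t$, and $s+t$ is the supremum of $s,t$ in this order. $\mathcal{A}_2^1$: Let $A_2=\langle e,a\mid eae=e^2=e,\ aea=a,\ a^2=0\rangle=\{e,a,ae,ea,0\}$ and let $A_2^1$ be $A_2$ with an identity element $1$ adjoined. Represent $A_2^1$ by order-preserving maps of the chain $0<1<2$ fixing $2$ (maps act on the right, composition $x(\alpha\beta)=(x\alpha)\beta$): $1\mapsto$ identity; $ea\mapsto(0\mapsto1,1\mapsto1,2\mapsto2)$; $ae\mapsto(0\mapsto0,1\mapsto2,2\mapsto2)$; $a\mapsto(0\mapsto1,1\mapsto2,2\mapsto2)$; $e\mapsto(0\mapsto0,1\mapsto0,2\mapsto2)$; $0\mapsto$ the constant map to $2$. The set of these maps is closed under pointwise maximum, and $\mathcal{A}_2^1=(A_2^1,+,\cdot)$ has addition given by pointwise maximum; equivalently its semilattice order is $e<1<ea$, $1<ae$, $ea<a$, $ae<a$, $a<0$ (with $ea,ae$ incomparable). $\mathcal{B}_2^1$: Let $B_2=\langle c,d\mid cdc=c,\ dcd=d,\ c^2=d^2=0\rangle=\{c,d,cd,dc,0\}$ and $B_2^1$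 be $B_2$ with identity $1$ adjoined. $\mathcal{B}_2^1=(B_2^1,+,\cdot)$ where addition is the join in the order: $0$ is the top, $c,d,cd,dc$ lie directly below $0$, and $1$ lies below $cd$ and $dc$ only (so e.g. $1+cd=cd$, $c+d=0$, $1+c=0$, $cd+dc=0$). *)

(* Defs.v *)
From Stdlib Require Import Arith.

(* ---------- A_2^1 via order-preserving maps of the chain 0<1<2 fixing 2 ---------- *)
Inductive A21 : Type := A1 | Ae | Aa | Aae | Aea | A0.

(* A map is recorded by its values (0 alpha, 1 alpha, 2 alpha). *)
Definition tmap : Type := (nat * nat * nat)%type.

Definition A_tomap (x : A21) : tmap :=
  match x with
  | A1  => (0, 1, 2)
  | Aea => (1, 1, 2)
  | Aae => (0, 2, 2)
  | Aa  => (1, 2, 2)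
  | Ae  => (0, 0, 2)
  | A0  => (2, 2, 2)
  end.

Definition tapp (f : tmap) (i : nat) : nat :=
  match f with (f0, f1, f2) => match i with 0 => f0 | 1 => f1 | _ => f2 end end.

(* right action: x (alpha beta) = (x alpha) beta *)
Definition tcomp (f g : tmap) : tmap :=
  (tapp g (tapp f 0), tapp g (tapp f 1), tapp g (tapp f 2)).

Definition tmax (f g : tmap) : tmap :=
  (Nat.max (tapp f 0) (tapp g 0), Nat.max (tapp f 1) (tapp g 1),
   Nat.max (tapp f 2) (tapp g 2)).

Definition tmap_eqb (f g : tmap) : bool :=
  Nat.eqb (tapp f 0) (tapp g 0) && Nat.eqb (tapp f 1) (tapp g 1)
  && Nat.eqb (tapp f 2) (tapp g 2).

(* decoding (total; default never reached on the represented set, see lemmas) *)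
Definition A_ofmap (f : tmap) : A21 :=
  if tmap_eqb f (A_tomap A1) then A1 else
  if tmap_eqb f (A_tomap Ae) then Ae else
  if tmap_eqb f (A_tomap Aa) then Aa else
  if tmap_eqb f (A_tomap Aae) then Aae else
  if tmap_eqb f (A_tomap Aea) then Aea else A0.

Definition A_mul (x y : A21) : A21 := A_ofmap (tcomp (A_tomap x) (A_tomap y)).
Definition A_add (x y : A21) : A21 := A_ofmap (tmax (A_tomap x) (A_tomap y)).

Lemma A_mul_spec x y : A_tomap (A_mul x y) = tcomp (A_tomap x) (A_tomap y).
Proof. destruct x, y; reflexivity. Qed.
Lemma A_add_spec x y : A_tomap (A_add x y) = tmax (A_tomap x) (A_tomap y).
Proof. destruct x, y; reflexivity. Qed.
(* sanity: the defining relations of A_2 *)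
Lemma A_rels : A_mul (A_mul Ae Aa) Ae = Ae /\ A_mul Ae Ae = Ae /\
  A_mul (A_mul Aa Ae) Aa = Aa /\ A_mul Aa Aa = A0 /\
  A_mul Aa Ae = Aae /\ A_mul Ae Aa = Aea.
Proof. repeat split. Qed.

Inductive B21 : Type := B1 | Bc | Bd | Bcd | Bdc | B0.

(* B_2 as the Brandt semigroup: c = e12, d = e21, cd = e11, dc = e22 *)
Definition B_unit (x : B21) : option (nat * nat) :=
  match x with
  | Bc => Some (1, 2) | Bd => Some (2, 1)
  | Bcd => Some (1, 1) | Bdc => Some (2, 2) | _ => None
  end.

Definition B_ofunit (p : nat * nat) : B21 :=
  match p with
  | (1, 2) => Bc | (2, 1) => Bd | (1, 1) => Bcd | (2, 2) => Bdc | _ => B0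
  end.

Definition B_mul (x y : B21) : B21 :=
  match x, y with
  | B1, _ => y
  | _, B1 => x
  | B0, _ => B0
  | _, B0 => B0
  | _, _ =>
    match B_unit x, B_unit y with
    | Some (i, j), Some (k, l) => if Nat.eqb j k then B_ofunit (i, l) else B0
    | _, _ => B0
    end
  end.

Definition B_eqb (x y : B21) : bool :=
  match x, y with
  | B1, B1 | Bc, Bc | Bd, Bd | Bcd, Bcd | Bdc, Bdc | B0, B0 => true
  | _, _ => false
  end.

(* join: 0 top; c,d,cd,dc directly below 0; 1 below cd and dc only *)
Definition B_add (x y : B21) : B21 :=
  if B_eqb x y then x else
  match x, y with
  | B1, Bcd | Bcd, B1 => Bcd
  | B1, Bdc | Bdc, B1 => Bdc
  | _, _ => B0
  end.

Lemma B_rels : B_mul (B_mul Bc Bd) Bc = Bc /\ B_mul (B_mul Bd Bc) Bd = Bd /\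
  B_mul Bc Bc = B0 /\ B_mul Bd Bd = B0 /\ B_mul Bc Bd = Bcd /\ B_mul Bd Bc = Bdc.
Proof. repeat split. Qed.

Definition AA_add (x y : A21 * A21) : A21 * A21 :=
  (A_add (fst x) (fst y), A_add (snd x) (snd y)).
Definition AA_mul (x y : A21 * A21) : A21 * A21 :=
  (A_mul (fst x) (fst y), A_mul (snd x) (snd y)).

Definition is_subsemiring (S : A21 * A21 -> Prop) : Prop :=
  forall x y, S x -> S y -> S (AA_add x y) /\ S (AA_mul x y).

Definition is_hom_image_of (S : A21 * A21 -> Prop) (f : A21 * A21 -> B21) : Prop :=
  (forall x y, S x -> S y ->
     f (AA_add x y) = B_add (f x) (f y) /\ f (AA_mul x y) = B_mul (f x) (f y))
  /\ (forall b : B21, exists x, S x /\ f x = b).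

(* Main.v *)
Require Import Defs.

Definition fb (x : A21 * A21) : option B21 :=
  match x with
  | (A0, _) => Some B0
  | (A1, A0) => Some B0 | (A1, A1) => Some B1 | (A1, Aa) => Some B0
  | (Aa, A0) => Some B0 | (Aa, A1) => Some B0 | (Aa, Aa) => Some B0
  | (Aa, Aae) => Some B0 | (Aa, Ae) => Some Bc | (Aa, Aea) => Some B0
  | (Aae, A0) => Some B0 | (Aae, Aa) => Some B0 | (Aae, Aea) => Some Bcd
  | (Ae, A0) => Some B0 | (Ae, Aa) => Some Bd
  | (Aea, A0) => Some B0 | (Aea, Aa) => Some B0 | (Aea, Aae) => Some Bdc
  | _ => None
  end.

Definition Sb (x : A21 * A21) : bool :=
  match fb x with Some _ => true | None => false end.
Definition fS (x : A21 * A21) : B21 :=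
  match fb x with Some b => b | None => B0 end.

Theorem proposition3p2 :
  exists (S : A21 * A21 -> Prop) (f : A21 * A21 -> B21),
    is_subsemiring S /\ is_hom_image_of S f.
Proof.
  exists (fun x => Sb x = true), fS.
  split; [|split].
  - intros [x1 x2] [y1 y2]; destruct x1, x2; try discriminate;
      destruct y1, y2; try discriminate; intros _ _; split; reflexivity.
  - intros [x1 x2] [y1 y2]; destruct x1, x2; try discriminate;
      destruct y1, y2; try discriminate; intros _ _; split; reflexivity.
  - intros b; destruct b.
    + exists (A1, A1); split; reflexivity.
    + exists (Aa, Ae); split; reflexivity.
    + exists (Ae, Aa); split; reflexivity.
    + exists (Aae, Aea); split; reflexivity.
    + exists (Aea, Aae); split; reflexivity.
    + exists (A0, A0); split; reflexivity.
Qed.
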